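(* Let $n$ be a positive integer and $z$ a complex variable, and define $$g(z)=\sum_{t=0}^{n}\binom{t+n}{t}\left(-\frac12\right)^t(1+z)^t\sum_{s=0}^{n-t}\binom ns\binom n{s+t}z^s.$$ Then $g(z)=0$ if $n$ is odd, and $g(z)=\dfrac{(-1)^{n/2}}{2^n}\dbinom{n}{n/2}(z-1)^n$ if $n$ is even. *)

(* Defs.v *)
From HB Require Import structures.
From mathcomp Require Import all_boot all_order all_algebra.
From mathcomp Require Import complex.
Set Implicit Arguments. Unset Strict Implicit. Unset Printing Implicit Defensive.
Import Order.TTheory GRing.Theory Num.Theory.
Local Open Scope ring_scope.

Definition gfun (R : rcfType) (n : nat) (z : R[i]) : R[i] :=
  \sum_(0 <= t < n.+1)
    ('C(t + n, t))%:R * (- (2%:R)^-1) ^+ t * (1 + z) ^+ t *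
    \sum_(0 <= s < (n - t).+1) ('C(n, s) * 'C(n, s + t))%:R * z ^+ s.

(* Main.v *)
Require Import Defs.
From HB Require Import structures.
From mathcomp Require Import all_boot all_order all_algebra.
From mathcomp Require Import complex.
From mathcomp Require Import zify ring.
Import Order.TTheory GRing.Theory Num.Theory.
Local Open Scope ring_scope.

Lemma coefXaddC (F : comNzRingType) (a : F) m i :
  (('X + a%:P)^+m)`_i = 'C(m,i)%:R * a^+(m-i).
Proof.
rewrite addrC exprDn coef_sum.
have [lt|ge] := ltnP i m.+1.
  rewrite (bigD1 (Ordinal lt)) //= big1 ?addr0.
    by rewrite coefMn -rmorphXn coefCM coefXn eqxx mulr1 mulr_natl.
  move=> j /negbTE ne; rewrite coefMn -rmorphXn coefCM coefXn.
  case: eqP => [e|]; last by rewrite mulr0 mul0rn.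
  by move: ne; rewrite -(inj_eq val_inj) /= e eqxx.
rewrite bin_small // mul0r big1 // => j _.
rewrite coefMn -rmorphXn coefCM coefXn.
case: eqP => [e|]; last by rewrite mulr0 mul0rn.
by move: (ltn_ord j); rewrite -e ltnNge ge.
Qed.

Lemma sum_trunc (F : zmodType) (f : nat -> F) m k : (m <= k)%N ->
  (forall i, (m <= i)%N -> (i < k)%N -> f i = 0) ->
  \sum_(0 <= i < k) f i = \sum_(0 <= i < m) f i.
Proof.
move=> mk H; rewrite (big_cat_nat (leq0n m) mk) /=.
rewrite [X in _ + X = _]big_nat_cond [X in _ + X = _]big1 ?addr0 //.
by move=> i /andP[/andP[a b] _]; exact: H.
Qed.

Lemma sum_shift (F : zmodType) (f : nat -> F) a k :
  (forall i, (i < a)%N -> f i = 0) ->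
  \sum_(0 <= i < a + k) f i = \sum_(0 <= i < k) f (i + a)%N.
Proof.
move=> H; rewrite (big_cat_nat (leq0n a) (leq_addr k a)) /=.
rewrite [X in X + _ = _]big_nat_cond [X in X + _ = _]big1 ?add0r; last first.
  by move=> i /andP[/andP[_ b] _]; exact: H.
by rewrite -{1}(add0n a) big_addn addKn.
Qed.

Lemma coefP (F : comNzRingType) n (z : F) t : (t <= n)%N ->
 (('X + 1%:P)^+n * ('X + z%:P)^+n)`_(t+n) =
   \sum_(0 <= s < (n - t).+1) ('C(n,s)*'C(n,s+t))%:R * z^+s.
Proof.
move=> tn; rewrite coefM -(big_mkord xpredT (fun j => (('X + 1%:P)^+n)`_j * (('X + z%:P)^+n)`_(t+n-j))) -addnS sum_shift; last first.
  move=> j jt; rewrite !coefXaddC [X in _ * (X%:R * _)]bin_small ?mul0r ?mulr0 //.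
  lia.
rewrite (@sum_trunc _ _ (n - t).+1); last 2 first.
- lia.
- move=> s h1 h2; rewrite coefXaddC bin_small ?mul0r //; lia.
apply: eq_big_nat => s /andP[_ hs].
rewrite !coefXaddC expr1n mulr1.
have -> : (t + n - (s + t) = n - s)%N by lia.
rewrite bin_sub; last by lia.
have -> : (n - (n - s) = s)%N by lia.
by rewrite natrM mulrA [_ * _%:R]mulrC.
Qed.

Lemma compcoef (F : comNzRingType) (P : {poly F}) n w :
  (size P <= (n+n).+1)%N ->
  (P \Po ('X + w%:P))`_n = \sum_(0 <= t < n.+1) P`_(t+n) * ('C(t+n,t)%:R * w^+t).
Proof.
move=> hs; rewrite coef_comp_poly.
rewrite -(big_mkord xpredT (fun i => P`_i * (('X + w%:P) ^+ i)`_n)).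
rewrite -(@sum_trunc _ _ _ (n+n).+1) //; last first.
  by move=> i h1 _; rewrite nth_default ?mul0r.
rewrite -addnS sum_shift; last first.
  by move=> i hi; rewrite coefXaddC bin_small ?mul0r ?mulr0.
apply: eq_big_nat => t _; rewrite coefXaddC addnK.
have e : 'C(t + n, n) = 'C(t + n, t).
  have hl : (t <= t + n)%N by rewrite leq_addr.
  by rewrite -(bin_sub hl) addKn.
by rewrite e.
Qed.

Lemma comp_eq (F : numFieldType) n (z : F) :
  let w := - (2%:R)^-1 * (1 + z) in
  let c := (1 - z) / 2%:R in
  (('X + 1%:P)^+n * ('X + z%:P)^+n) \Po ('X + w%:P) =
  (('X + (- (c ^+ 2))%:P)^+n) \Po 'X^2.
Proof.
move=> w c.
have h2 : (2%:R : F) != 0 by rewrite pnatr_eq0.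
rewrite -exprMn !rmorphXn /=; congr (_ ^+ n).
rewrite comp_polyM !comp_polyD !comp_polyX !comp_polyC.
have e1 : w + 1 = c by rewrite /w /c; field.
have e2 : w + z = - c by rewrite /w /c; field.
rewrite -!addrA -!polyCD e1 e2.
have key : forall a : F, ('X + a%:P) * ('X + (-a)%:P) = 'X^2 + (- a^+2)%:P.
  move=> a; rewrite !polyCN expr2 polyCM; ring.
exact: key.
Qed.

Lemma coef4 (F : comNzRingType) n (b : F) :
  ((('X + b%:P)^+n) \Po 'X^2)`_n =
  if odd n then 0 else 'C(n, n./2)%:R * b ^+ (n - n./2).
Proof.
rewrite coef_comp_poly_Xn // dvdn2 divn2 coefXaddC.
by case: (odd n).
Qed.

Lemma mainF (F : numFieldType) (n : nat) (z : F) :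
  \sum_(0 <= t < n.+1)
    ('C(t + n, t))%:R * (- (2%:R)^-1) ^+ t * (1 + z) ^+ t *
    \sum_(0 <= s < (n - t).+1) ('C(n, s) * 'C(n, s + t))%:R * z ^+ s =
  (if odd n then 0
   else (-1) ^+ (n./2) / (2%:R ^+ n) * ('C(n, n./2))%:R * (z - 1) ^+ n).
Proof.
set w := - (2%:R)^-1 * (1 + z).
set c := (1 - z) / (2%:R : F).
set P := ('X + 1%:P)^+n * ('X + z%:P)^+n.
have hs : (size P <= (n+n).+1)%N.
  rewrite /P -exprMn; apply: leq_trans (size_poly_exp_leq _ _) _.
  have h3 : (size ((('X + 1%:P) * ('X + z%:P))%R : {poly F}) <= 3)%N.
    by apply: leq_trans (size_polyMleq _ _) _; rewrite !size_XaddC.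
  rewrite ltnS addnn -mul2n leq_mul2r; apply/orP; right.
  set s := size _ in h3 *; lia.
rewrite (@eq_big_nat _ _ _ 0 n.+1 _ (fun t => P`_(t+n) * ('C(t+n,t)%:R * w^+t))); last first.
  move=> t /andP[_ ht].
  rewrite /P coefP; last by lia.
  by rewrite /w exprMn; ring.
rewrite -compcoef // /P comp_eq coef4.
case: ifP => // hodd.
have nk : n = (n./2 + n./2)%N.
  by move: (odd_double_half n); rewrite hodd add0n -addnn.
set k := n./2 in nk *.
have h2 : (2%:R : F) != 0 by rewrite pnatr_eq0.
have e0 : forall a : F, (- a ^+ 2) ^+ (n - k) = (-1) ^+ k * a ^+ n.
  move=> a; rewrite {1}nk addnK -[- a ^+ 2]mulN1r exprMn -exprM.
  congr (_ * (_ ^+ _)); clearbody k; lia.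
have e2 : forall a b : F, ((a - b) / 2%:R) ^+ n = (b - a) ^+ n / 2%:R ^+ n.
  move=> a b; rewrite exprMn exprVn; congr (_ * _).
  rewrite -opprB -mulN1r exprMn.
  have -> : (-1 : F) ^+ n = 1.
    by rewrite -signr_odd hodd.
  by rewrite mul1r.
rewrite e0 e2; field.

apply: expf_neq0 h2.
Qed.

Theorem lemma8 (R : rcfType) (n : nat) (hn : (0 < n)%N) (z : R[i]) :
  gfun n z =
  (if odd n then 0
   else (-1) ^+ (n./2) / (2%:R ^+ n) * ('C(n, n./2))%:R * (z - 1) ^+ n).
Proof. rewrite /gfun. exact: (@mainF R[i] n z). Qed.
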